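(* Let $c>1$, $\sigma=1-\frac1c$, and let $p,q\in[1,\infty)$ satisfy $(p-1)(q-1)=\sigma^2$. Then for every $\gamma\in[0,1]$ and every $m\ge1$, $$\Phi_r\!\left(\frac1m,\gamma\right)\ \ge\ \gamma^q\,m^{1+\frac qp-q}.$$
   Context: Work on $V=\{-1,1\}^d$ with the uniform probability measure $\mu$. For $x\in\{-1,1\}^d$, $N_\sigma(x)$ is the distribution of $y$ obtained by independently, for each coordinate $i$, setting $y_i=x_i$ with probability $\sigma$ and $y_i$ uniform in $\{-1,1\}$ otherwise. Let $e$ be the joint distribution of the pair $(x,y)$ with $x\sim\mu$ (data point) and $y\sim N_\sigma(x)$ (query); both marginals are $\mu$. The robust expansion is $$\Phi_r(\delta,\gamma)=\min_{A\subseteq V:\ 0<\mu(A)\le\delta}\ \ \min_{B\subseteq V:\ \Pr_{(x,y)\sim e}[x\in B\mid y\in A]\ge\gamma}\ \frac{\mu(B)}{\mu(A)}.$$ *)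

(* Defs.v *)
From Stdlib Require Import Reals Lra List.
Import ListNotations.
Open Scope R_scope.

(* Points of {-1,1}^d are encoded as boolean lists of length d
   (true = +1, false = -1). *)
Fixpoint cube (d : nat) : list (list bool) :=
  match d with
  | O => [ [] ]
  | S d' => flat_map (fun v => [true :: v; false :: v]) (cube d')
  end.

(* Subsets of V are boolean predicates; only their values on [cube d] matter. *)
Definition subset_V := list bool -> bool.

Definition sumR {T : Type} (f : T -> R) (l : list T) : R :=
  fold_right (fun v acc => f v + acc) 0 l.

Definition ind (b : bool) : R := if b then 1 else 0.

Definition mu (d : nat) (A : subset_V) : R :=
  sumR (fun v => ind (A v)) (cube d) / 2 ^ d.

(* Transition probability Pr[y | x] for y ~ N_sigma(x): each coordinate is
   kept with prob. sigma, otherwise resampled uniformly; hence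
   Pr[y_i = x_i] = (1+sigma)/2 and Pr[y_i <> x_i] = (1-sigma)/2. *)
Fixpoint noise_kernel (sigma : R) (x y : list bool) : R :=
  match x, y with
  | a :: x', b :: y' =>
      (if Bool.eqb a b then (1 + sigma) / 2 else (1 - sigma) / 2)
      * noise_kernel sigma x' y'
  | _, _ => 1
  end.

(* Joint law e of (x,y): x ~ mu, y ~ N_sigma(x).
   joint_prob d sigma B A = Pr_{(x,y)~e}[x in B /\ y in A]. *)
Definition joint_prob (d : nat) (sigma : R) (B A : subset_V) : R :=
  sumR (fun x => sumR (fun y =>
          ind (B x) * ind (A y) * (/ 2 ^ d) * noise_kernel sigma x y)
        (cube d)) (cube d).

(* Pr_{(x,y)~e}[x in B | y in A]; the y-marginal of e is mu. *)
Definition cond_prob (d : nat) (sigma : R) (B A : subset_V) : R :=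
  joint_prob d sigma B A / mu d A.

(* The set of values over which the robust expansion Phi_r(delta,gamma)
   is the minimum:  { mu(B)/mu(A) : 0 < mu(A) <= delta,
                                    Pr[x in B | y in A] >= gamma }. *)
Definition Phi_r_values (d : nat) (sigma delta gamma : R) (r : R) : Prop :=
  exists A B : subset_V,
    0 < mu d A /\ mu d A <= delta /\
    cond_prob d sigma B A >= gamma /\
    r = mu d B / mu d A.

(* Phi_r(delta,gamma) >= L, i.e. L is a lower bound of the (finite) set whose
   minimum is Phi_r (with the convention min of the empty set = +infinity). *)
Definition Phi_r_ge (d : nat) (sigma delta gamma L : R) : Prop :=
  forall r, Phi_r_values d sigma delta gamma r -> r >= L.

(* Real power x^y for x >= 0, with the convention 0^y = 0 (y > 0);
   Stdlib's Rpower 0 y would be 1. *)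
Definition rpow (x y : R) : R := if Req_EM_T x 0 then 0 else Rpower x y.

(* Main.v *)
From Coquelicot Require Import Coquelicot.
From Stdlib Require Import Reals.
From Stdlib Require Import Lra List.
Require Import Defs.
Import ListNotations.
Open Scope R_scope.

Lemma mono_le (f df : R -> R) (a b : R) : a <= b ->
  (forall x, a <= x <= b -> is_derive f x (df x)) ->
  (forall x, a <= x <= b -> 0 <= df x) -> f a <= f b.
Proof.
  intros Hab Hd Hp.
  destruct (MVT_gen f a b df) as [c [Hc Heq]].
  - intros x Hx. rewrite Rmin_left in Hx by lra. rewrite Rmax_right in Hx by lra.
    apply Hd; lra.
  - intros x Hx. rewrite Rmin_left in Hx by lra. rewrite Rmax_right in Hx by lra.
    apply continuity_pt_filterlim. apply (@ex_derive_continuous R_AbsRing R_NormedModule f x).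
    eexists. apply Hd; lra.
  - rewrite Rmin_left in Hc by lra. rewrite Rmax_right in Hc by lra.
    assert (0 <= df c * (b - a)) by (apply Rmult_le_pos; [apply Hp; lra| lra]).
    lra.
Qed.

(* LSI on two points *)
Lemma lsi_aux (t v : R) : 0 < t -> 0 < v ->
  v*v * ln v + t*t*ln t - ((v*v+t*t)/2) * ln ((v*v+t*t)/2) - (v-t)*(v-t)/2 <= 0.
Proof.
  intros Ht Hv.
  set (g := fun v => v*v * ln v + t*t*ln t - ((v*v+t*t)/2) * ln ((v*v+t*t)/2) - (v-t)*(v-t)/2).
  set (h := fun v => 2 * ln v - ln ((v*v+t*t)/2) - 1 + t / v).
  assert (Hg : forall w, 0 < w -> is_derive g w (w * h w)).
  { intros w Hw. unfold g, h. auto_derive.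
    - split; [lra|]. split; [|exact I]. nra.
    - assert (0 < (w*w+t*t)/2) by nra. unfold Rdiv; field. lra. }
  assert (Hh : forall w, 0 < w -> is_derive (fun x => - h x) w (t*(w-t)*(w-t)/(w*w*(w*w+t*t)))).
  { intros w Hw. unfold h. auto_derive.
    - split; [lra|]. split; [|split; [lra|exact I]]. nra.
    - assert (0 < (w*w+t*t)) by nra. unfold Rdiv; field. lra. }
  assert (Hht : h t = 0).
  { unfold h; cbv beta. replace ((t*t+t*t)/2) with (t*t) by field. rewrite ln_mult by lra. field. lra. }
  assert (Hgt : g t = 0).
  { unfold g; cbv beta. replace ((t*t+t*t)/2) with (t*t) by field. rewrite ln_mult by lra. lra. }
  assert (Hhd : forall a b, 0 < a -> a <= b -> h b <= h a).
  { intros a b Ha Hab. assert (- h a <= - h b); [|lra].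
    apply (mono_le (fun x => - h x) (fun w => t*(w-t)*(w-t)/(w*w*(w*w+t*t)))); auto.
    - intros x Hx. apply Hh. lra.
    - intros x Hx. apply Rmult_le_pos.
      + rewrite Rmult_assoc. apply Rmult_le_pos; [lra|exact (Rle_0_sqr (x-t))].
      + apply Rlt_le, Rinv_0_lt_compat. assert (0 < x*x) by nra. nra. }
  change (g v <= 0). destruct (Rle_dec t v) as [Htv|Htv].
  - assert (- g t <= - g v); [|lra].
    apply (mono_le (fun x => - g x) (fun w => - (w * h w))); auto.
    + intros x Hx. apply (is_derive_opp g). apply Hg. lra.
    + intros x Hx. assert (h x <= 0) by (rewrite <- Hht; apply Hhd; lra). nra.
  - assert (g v <= g t); [|lra]. apply (mono_le g (fun w => w * h w)); [lra | |].
    + intros x Hx. apply Hg. lra.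
    + intros x Hx. assert (0 <= h x) by (rewrite <- Hht; apply Hhd; lra). nra.
Qed.

Lemma exp_le_mono x y : x <= y -> exp x <= exp y.
Proof. intro H. destruct (Req_dec x y) as [->|]; [lra|]. apply Rlt_le, exp_increasing. lra. Qed.
Lemma ln_le_mono x y : 0 < x -> x <= y -> ln x <= ln y.
Proof. intros H H'. destruct (Req_dec x y) as [->|]; [lra|]. apply Rlt_le, ln_increasing; lra. Qed.

Definition Ch (z : R) := (exp z + exp (- z)) / 2.
Definition Sh (z : R) := (exp z - exp (- z)) / 2.

Lemma Sh_nonneg z : 0 <= z -> 0 <= Sh z.
Proof. intro H. unfold Sh. assert (exp (-z) <= exp z) by (apply exp_le_mono; lra). lra. Qed.
Lemma Ch_ge1 z : 1 <= Ch z.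
Proof.
  unfold Ch. assert (exp z * exp (-z) = 1) by (rewrite <- exp_plus; replace (z + - z) with 0 by ring; apply exp_0).
  pose proof (exp_pos z). pose proof (exp_pos (-z)).
  set (u := exp z) in *. set (w := exp (-z)) in *.
  pose proof (Rle_0_sqr (u - w)). unfold Rsqr in *.
  assert (4 <= (u+w)*(u+w)) by nra. nra.
Qed.

Lemma chq (a b : R) : 0 <= b <= a -> a*a*(Ch b - 1) <= b*b*(Ch a - 1).
Proof.
  intros [Hb Hba].
  set (n := fun z => z * Ch z - Sh z).
  assert (Hn : forall z, 0 <= z -> 0 <= n z).
  { intros z Hz. replace 0 with (n 0) by (unfold n, Sh; cbv beta; rewrite Ropp_0; lra).
    apply (mono_le n (fun z => z * Sh z)); [lra| |].
    - intros x _. unfold n, Ch, Sh. auto_derive; auto. field.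
    - intros x Hx. apply Rmult_le_pos; [lra|apply Sh_nonneg; lra]. }
  set (m := fun z => z * Sh z - 2 * Ch z + 2).
  assert (Hm : forall z, 0 <= z -> 0 <= m z).
  { intros z Hz. replace 0 with (m 0) by (unfold m, Ch; cbv beta; rewrite Ropp_0, exp_0; lra).
    apply (mono_le m n); [lra| |].
    - intros x _. unfold m, n, Ch, Sh. auto_derive; auto. field.
    - intros x Hx. apply Hn; lra. }
  destruct (Req_dec b 0) as [H0|H0].
  - subst b. unfold Ch at 1. rewrite Ropp_0, exp_0. pose proof (Ch_ge1 a). nra.
  - assert (Hb0 : 0 < b) by (destruct Hb; [lra|congruence]).
    set (F := fun z => (Ch z - 1) / (z*z)).
    assert (F b <= F a).
    { apply (mono_le F (fun z => m z / (z*z*z))); [lra| |].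
      - intros x Hx. unfold F, m, Ch, Sh. auto_derive.
        + assert (0 < x*x) by nra. lra.
        + field. lra.
      - intros x Hx. apply Rmult_le_pos; [apply Hm; lra|].
        apply Rlt_le, Rinv_0_lt_compat. assert (0 < x*x) by nra. nra. }
    unfold F in H. assert (0 < b*b) by nra. assert (0 < a*a) by nra.
    apply (Rmult_le_compat_r (a*a*(b*b))) in H; [|nra].
    replace ((Ch b - 1) / (b*b) * (a*a*(b*b))) with (a*a*(Ch b - 1)) in H by (field; lra).
    replace ((Ch a - 1) / (a*a) * (a*a*(b*b))) with (b*b*(Ch a - 1)) in H by (field; lra).
    exact H.
Qed.

Lemma Ch_even z : Ch (- z) = Ch z.
Proof. unfold Ch. rewrite Ropp_involutive. field. Qed.

Lemma Ch_abs z : Ch (Rabs z) = Ch z.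
Proof. unfold Rabs. destruct (Rcase_abs z); [apply Ch_even|reflexivity]. Qed.

Lemma sv_core (r d : R) : 1 < r ->
  4*(r-1)*(Ch (r*d) - 1) <= r*r*(Ch (r*d) - Ch ((2-r)*d)).
Proof.
  intro Hr.
  destruct (Req_dec d 0) as [->|Hd].
  - rewrite !Rmult_0_r. unfold Ch. rewrite Ropp_0, exp_0. lra.
  - pose proof (chq (Rabs (r*d)) (Rabs ((2-r)*d))) as H.
    rewrite !Ch_abs in H.
    assert (Habs: forall z, Rabs z * Rabs z = z * z).
    { intro z. rewrite <- Rabs_mult. apply Rabs_pos_eq. nra. }
    rewrite !Habs in H.
    assert (H1 : (2-r)*d*((2-r)*d) <= r*d*(r*d)).
    { assert (0 < d*d) by nra. assert ((2-r)*(2-r) <= r*r) by nra. nra. }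
    assert (H2 : Rabs ((2-r)*d) <= Rabs (r*d)).
    { apply Rsqr_le_abs_0. unfold Rsqr. lra. }
    specialize (H (conj (Rabs_pos _) H2)).
    assert (0 < d*d) by nra.
    assert (r*r*(Ch ((2-r)*d) - 1) <= (2-r)*(2-r)*(Ch (r*d) - 1)).
    { apply (Rmult_le_reg_r (d*d)); [lra|].
      replace (r * r * (Ch ((2 - r) * d) - 1) * (d * d)) with (r*d*(r*d)*(Ch ((2-r)*d) - 1)) by ring.
      replace ((2-r)*(2-r)*(Ch (r*d) - 1) * (d * d)) with ((2-r)*d*((2-r)*d)*(Ch (r*d) - 1)) by ring.
      exact H. }
    nra.
Qed.

Lemma sv (r la lb : R) : 1 < r ->
  4*(r-1)*((exp (r/2*la) - exp (r/2*lb))*(exp (r/2*la) - exp (r/2*lb)))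
  <= r*r*((exp la - exp lb)*(exp ((r-1)*la) - exp ((r-1)*lb))).
Proof.
  intro Hr.
  set (c1 := (la+lb)/2). set (d := (la-lb)/2).
  replace la with (c1+d) by (unfold c1, d; field).
  replace lb with (c1-d) by (unfold c1, d; field).
  assert (E : forall x y, exp (x + y) = exp x * exp y) by (intros; apply exp_plus).
  set (u := exp (r*c1/2)).
  replace (exp (r/2*(c1+d))) with (u * exp (r*d/2)) by (unfold u; rewrite <- E; f_equal; field).
  replace (exp (r/2*(c1-d))) with (u * exp (-(r*d/2))) by (unfold u; rewrite <- E; f_equal; field).
  replace (exp (c1+d)) with (exp c1 * exp d) by (rewrite <- E; reflexivity).
  replace (exp (c1-d)) with (exp c1 * exp (-d)) by (rewrite <- E; reflexivity).
  replace (exp ((r-1)*(c1+d))) with (exp ((r-1)*c1) * exp ((r-1)*d)) by (rewrite <- E; f_equal; ring).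
  replace (exp ((r-1)*(c1-d))) with (exp ((r-1)*c1) * exp (-((r-1)*d))) by (rewrite <- E; f_equal; ring).
  assert (Hu : exp c1 * exp ((r-1)*c1) = u*u) by (unfold u; rewrite <- !E; f_equal; field).
  assert (F1 : exp (r*d/2) * exp (r*d/2) = exp (r*d)) by (rewrite <- E; f_equal; field).
  assert (F2 : exp (-(r*d/2)) * exp (-(r*d/2)) = exp (-(r*d))) by (rewrite <- E; f_equal; field).
  assert (F3 : exp (r*d/2) * exp (-(r*d/2)) = 1) by (rewrite <- E, <- exp_0; f_equal; field).
  assert (G1 : exp d * exp ((r-1)*d) = exp (r*d)) by (rewrite <- E; f_equal; ring).
  assert (G2 : exp (-d) * exp (-((r-1)*d)) = exp (-(r*d))) by (rewrite <- E; f_equal; ring).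
  assert (G3 : exp d * exp (-((r-1)*d)) = exp ((2-r)*d)) by (rewrite <- E; f_equal; ring).
  assert (G4 : exp (-d) * exp ((r-1)*d) = exp (-((2-r)*d))) by (rewrite <- E; f_equal; ring).
  pose proof (sv_core r d Hr) as K. unfold Ch in K.
  assert (Hu2 : 0 <= u*u) by nra.
  transitivity (u*u*(4*(r-1)*(2*((exp (r*d) + exp (-(r*d)))/2 - 1)))).
  - right.
    transitivity (4*(r-1)*(u*u)*(exp (r*d/2) * exp (r*d/2) + exp (-(r*d/2)) * exp (-(r*d/2)) - 2 * (exp (r*d/2) * exp (-(r*d/2))))); [ring|].
    rewrite F1, F2, F3. field.
  - transitivity (u*u*(r*r*(2*((exp (r*d) + exp (-(r*d)))/2 - (exp ((2-r)*d) + exp (-((2-r)*d)))/2)))).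
    + apply Rmult_le_compat_l; [exact Hu2|]. nra.
    + right.
      transitivity (r*r*(exp c1 * exp ((r-1)*c1))*((exp d * exp ((r-1)*d)) + (exp (-d) * exp (-((r-1)*d))) - (exp d * exp (-((r-1)*d))) - (exp (-d) * exp ((r-1)*d)))).
      * rewrite Hu, G1, G2, G3, G4. field.
      * ring.
Qed.

Lemma key_ineq (r la lb : R) : 1 < r ->
  2*(r-1)*((exp (r*la)*(r*la) + exp (r*lb)*(r*lb))/2
     - (exp (r*la) + exp (r*lb))/2 * ln ((exp (r*la) + exp (r*lb))/2))
  <= r*r/4*((exp la - exp lb)*(exp ((r-1)*la) - exp ((r-1)*lb))).
Proof.
  intro Hr.
  pose proof (sv r la lb Hr) as S.
  set (v := exp (r/2*la)). set (t := exp (r/2*lb)).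
  pose proof (lsi_aux t v (exp_pos _) (exp_pos _)) as L.
  assert (Ev : v*v = exp (r*la)) by (unfold v; rewrite <- exp_plus; f_equal; field).
  assert (Et : t*t = exp (r*lb)) by (unfold t; rewrite <- exp_plus; f_equal; field).
  assert (Lv : ln v = r/2*la) by (unfold v; apply ln_exp).
  assert (Lt : ln t = r/2*lb) by (unfold t; apply ln_exp).
  rewrite Ev, Et, Lv, Lt in L. fold v t in S.
  set (M := (exp (r*la) + exp (r*lb))/2) in *.
  assert (Ent : (exp (r*la)*(r*la) + exp (r*lb)*(r*lb))/2 - M * ln M
     = exp (r*la) * (r/2*la) + exp (r*lb) * (r/2*lb) - M * ln M) by field.
  rewrite Ent.
  assert (0 <= (v-t)*(v-t)) by (apply Rle_0_sqr).
  nra.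
Qed.

Definition rr (s rho : R) := 1 + (s-1)/(rho*rho).
Definition Mf (r y : R) := (exp (r * ln (1+y)) + exp (r * ln (1-y)))/2.
Definition Psi (s x rho : R) := / rr s rho * ln (Mf (rr s rho) (rho*x)).

Definition dPsi (s x rho : R) :=
   (let r := rr s rho in let la := ln (1+rho*x) in let lb := ln (1-rho*x) in
    let M := Mf r (rho*x) in
    (r*r/4*((exp la - exp lb)*(exp ((r-1)*la) - exp ((r-1)*lb)))
     - 2*(r-1)*((exp (r*la)*(r*la) + exp (r*lb)*(r*lb))/2 - M * ln M)) / (rho*r*r*M)).

Lemma Psi_der (s x rho : R) : 1 < s -> 0 <= x < 1 -> 0 < rho <= 1 ->
  is_derive (Psi s x) rho (dPsi s x rho).
Proof.
  intros Hs Hx Hr. unfold dPsi.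
  assert (Hpp : 0 < rho*rho) by nra.
  assert (Hq : 0 < (s-1) * / (rho*rho)) by (apply Rmult_lt_0_compat; [lra| apply Rinv_0_lt_compat; lra]).
  assert (Hpx : 0 <= rho*x <= x) by (split; nra).
  unfold Psi, Mf, rr. auto_derive.
  - pose proof (exp_pos ((1 + (s - 1) * / (rho * rho)) * ln (1 + rho * x))).
    pose proof (exp_pos ((1 + (s - 1) * / (rho * rho)) * ln (1 + - (rho * x)))).
    repeat split; try lra.
  - replace (1 + - (rho*x)) with (1 - rho*x) by ring.
    cbv zeta. unfold Rdiv.
    assert (Ha : 0 < 1 + rho*x) by lra. assert (Hb : 0 < 1 - rho*x) by lra.
    rewrite !exp_ln by lra.
    set (r := 1 + (s - 1) * / (rho * rho)) in *.
    set (la := ln (1 + rho*x)). set (lb := ln (1 - rho*x)).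
    assert (Ea : exp ((r + -1)*la) = exp (r*la) * / (1 + rho*x)).
    { assert (exp ((r + -1)*la) * exp la = exp (r*la)) by (rewrite <- exp_plus; f_equal; ring).
      unfold la in *. rewrite exp_ln in H by lra. rewrite <- H. field. lra. }
    assert (Eb : exp ((r + -1)*lb) = exp (r*lb) * / (1 - rho*x)).
    { assert (exp ((r + -1)*lb) * exp lb = exp (r*lb)) by (rewrite <- exp_plus; f_equal; ring).
      unfold lb in *. rewrite exp_ln in H by lra. rewrite <- H. field. lra. }
    replace (r - 1) with (r + -1) by ring.
    rewrite Ea, Eb.
    pose proof (exp_pos (r*la)). pose proof (exp_pos (r*lb)).
    set (A := exp (r*la)) in *. set (B := exp (r*lb)) in *.
    set (LM := ln ((A+B) * /2)).
    unfold r. field. repeat split; try lra.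
Qed.

Lemma Psi_mono (s x rho0 : R) : 1 < s -> 0 <= x < 1 -> 0 < rho0 <= 1 ->
  Psi s x rho0 <= Psi s x 1.
Proof.
  intros Hs Hx Hr.
  apply (mono_le _ (dPsi s x) rho0 1 (proj2 Hr)).
  - intros y Hy. apply Psi_der; auto; lra.
  - intros y Hy. unfold dPsi. cbv zeta.
    assert (Hpp : 0 < y*y) by nra.
    assert (Hrr : 1 < rr s y).
    { unfold rr. assert (0 < (s-1)/(y*y)) by (unfold Rdiv; apply Rmult_lt_0_compat; [lra| apply Rinv_0_lt_compat; lra]). lra. }
    apply Rmult_le_pos.
    + pose proof (key_ineq (rr s y) (ln (1+y*x)) (ln (1-y*x)) Hrr). unfold Mf. lra.
    + apply Rlt_le, Rinv_0_lt_compat. unfold Mf.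
      pose proof (exp_pos (rr s y * ln (1 + y * x))). pose proof (exp_pos (rr s y * ln (1 - y * x))).
      apply Rmult_lt_0_compat; [|lra]. apply Rmult_lt_0_compat; [|lra]. nra.
Qed.

Lemma one_fun_log (s R0 x rho : R) : 1 < s < R0 -> 0 <= x < 1 -> 0 < rho ->
  rho*rho*(R0-1) = s-1 ->
  / R0 * ln (Mf R0 (rho*x)) <= / s * ln (Mf s x).
Proof.
  intros Hs Hx Hr Hrel.
  assert (Hr1 : rho <= 1).
  { destruct (Rle_dec rho 1); auto. assert (1 < rho*rho) by nra. nra. }
  pose proof (Psi_mono s x rho (proj1 Hs) Hx (conj Hr Hr1)) as H.
  unfold Psi in H.
  assert (E1 : rr s rho = R0). { unfold rr. field_simplify_eq; [nra|nra]. }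
  assert (E2 : rr s 1 = s). { unfold rr. field. }
  rewrite E1, E2, Rmult_1_l in H. exact H.
Qed.

Lemma rpow_exp x y : 0 < x -> rpow x y = exp (y * ln x).
Proof. intro H. unfold rpow. destruct (Req_EM_T x 0); [lra|reflexivity]. Qed.
Lemma rpow_0 y : rpow 0 y = 0.
Proof. unfold rpow. destruct (Req_EM_T 0 0); [reflexivity|lra]. Qed.
Lemma rpow_nonneg x y : 0 <= rpow x y.
Proof. unfold rpow. destruct (Req_EM_T x 0); [lra|]. unfold Rpower. left; apply exp_pos. Qed.
Lemma rpow_pos x y : 0 < x -> 0 < rpow x y.
Proof. intro H. rewrite rpow_exp by lra. apply exp_pos. Qed.
Lemma rpow_le_base x z y : 0 <= x <= z -> 0 <= y -> rpow x y <= rpow z y.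
Proof.
  intros [H0 H1] Hy. destruct (Req_dec x 0) as [->|Hx].
  - rewrite rpow_0. apply rpow_nonneg.
  - rewrite !rpow_exp by lra. apply exp_le_mono. apply Rmult_le_compat_l; auto.
    apply ln_le_mono; lra.
Qed.
Lemma rpow_mult_base x z y : 0 <= x -> 0 <= z -> rpow (x*z) y = rpow x y * rpow z y.
Proof.
  intros Hx Hz. destruct (Req_dec x 0) as [->|Hx0].
  { rewrite Rmult_0_l, !rpow_0. ring. }
  destruct (Req_dec z 0) as [->|Hz0].
  { rewrite Rmult_0_r, !rpow_0. ring. }
  rewrite !rpow_exp by nra. rewrite ln_mult by lra. rewrite <- exp_plus. f_equal. ring.
Qed.
Lemma rpow_rpow x y z : 0 <= x -> rpow (rpow x y) z = rpow x (y*z).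
Proof.
  intros Hx. destruct (Req_dec x 0) as [->|Hx0].
  { rewrite !rpow_0. reflexivity. }
  rewrite (rpow_exp x y) by lra. rewrite rpow_exp by apply exp_pos. rewrite ln_exp.
  rewrite rpow_exp by lra. f_equal. ring.
Qed.
Lemma rpow_1 x : 0 <= x -> rpow x 1 = x.
Proof.
  intros Hx. destruct (Req_dec x 0) as [->|Hx0]. { apply rpow_0. }
  rewrite rpow_exp by lra. rewrite Rmult_1_l. apply exp_ln. lra.
Qed.
Lemma rpow_inv_pow x y : 0 <= x -> y <> 0 -> rpow (rpow x y) (/ y) = x.
Proof. intros Hx Hy. rewrite rpow_rpow by auto. rewrite Rinv_r by auto. apply rpow_1; auto. Qed.
Lemma rpow_le_self a s : 0 <= a <= 1 -> 1 <= s -> rpow a s <= a.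
Proof.
  intros Ha Hs. destruct (Req_dec a 0) as [->|Ha0]. { rewrite rpow_0. lra. }
  rewrite rpow_exp by lra. rewrite <- (exp_ln a) at 2 by lra. apply exp_le_mono.
  assert (ln a <= 0). { rewrite <- ln_1. apply ln_le_mono; lra. } nra.
Qed.
Lemma rpow_eq0 x y : 0 <= x -> rpow x y = 0 -> x = 0.
Proof. intros Hx H. destruct (Req_dec x 0); auto. pose proof (rpow_pos x y). lra. Qed.

Lemma cont_left_le (F : R -> R) (C : R) :
  continuity_pt F 1 -> (forall e, 0 <= e < 1 -> F e <= C) -> F 1 <= C.
Proof.
  intros Hc Hle. destruct (Rle_dec (F 1) C) as [|Hn]; auto. exfalso.
  destruct (Hc (F 1 - C)) as [al [Hal Hd]]; [lra|].
  set (e := Rmax 0 (1 - al/2)).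
  assert (He : 0 <= e < 1). { unfold e. split; [apply Rmax_l|]. apply Rmax_lub_lt; lra. }
  specialize (Hd e). simpl in Hd. unfold R_dist in Hd.
  assert (Hde : Rabs (e - 1) < al).
  { rewrite Rabs_left by lra. unfold e. assert (1 - al/2 <= Rmax 0 (1 - al/2)) by apply Rmax_r. lra. }
  assert (Dx : D_x no_cond 1 e) by (split; [exact I| lra]). specialize (Hd (conj Dx Hde)). specialize (Hle e He).
  apply Rabs_def2 in Hd. lra.
Qed.

Definition nrm (p a1 a2 : R) := rpow ((rpow a1 p + rpow a2 p)/2) (/ p).

Lemma nrm_sym p a1 a2 : nrm p a1 a2 = nrm p a2 a1.
Proof. unfold nrm. f_equal. field. Qed.

Lemma nrm_nonneg p a1 a2 : 0 <= nrm p a1 a2.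
Proof. apply rpow_nonneg. Qed.

Lemma Mf_pos r y : 0 < Mf r y.
Proof. unfold Mf. pose proof (exp_pos (r * ln (1+y))). pose proof (exp_pos (r * ln (1-y))). lra. Qed.

Lemma nrm_Mf r y : -1 < y < 1 -> nrm r (1+y) (1-y) = exp (/ r * ln (Mf r y)).
Proof.
  intro H. unfold nrm. rewrite !(rpow_exp (1+_)) by lra. rewrite (rpow_exp (1-y)) by lra.
  rewrite rpow_exp by (apply (Mf_pos r y)). reflexivity.
Qed.

Lemma of_pos (s R0 rho e : R) : 1 < s < R0 -> 0 < rho -> rho*rho*(R0-1) = s-1 ->
  0 <= e <= 1 -> nrm R0 (1+rho*e) (1-rho*e) <= nrm s (1+e) (1-e).
Proof.
  intros Hs Hr Hrel He.
  assert (Hr1 : rho < 1).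
  { destruct (Rlt_dec rho 1); auto. assert (1 <= rho*rho) by nra. nra. }
  assert (Hlt : forall e, 0 <= e < 1 -> nrm R0 (1+rho*e) (1-rho*e) <= nrm s (1+e) (1-e)).
  { intros e0 He0. rewrite !nrm_Mf by nra. apply exp_le_mono.
    apply one_fun_log; auto. }
  destruct (Rlt_dec e 1) as [He1|He1]; [apply Hlt; lra|].
  assert (e = 1) by lra. subst e.
  set (F := fun e => exp (/ R0 * ln (Mf R0 (rho*e)))).
  replace (nrm R0 (1+rho*1) (1-rho*1)) with (F 1) by (unfold F; rewrite nrm_Mf by nra; reflexivity).
  apply cont_left_le.
  - apply continuity_pt_filterlim. apply (@ex_derive_continuous R_AbsRing R_NormedModule F 1).
    unfold F, Mf. auto_derive. pose proof (Mf_pos R0 (rho*1)). unfold Mf in H.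
    replace (1 + - (rho*1)) with (1 - rho*1) by ring. unfold Rdiv in H. repeat split; try lra.
  - intros e0 He0. unfold F. rewrite <- nrm_Mf by nra.
    eapply Rle_trans; [apply Hlt; auto|].
    unfold nrm. apply rpow_le_base; [|left; apply Rinv_0_lt_compat; lra].
    split; [pose proof (rpow_nonneg (1+e0) s); pose proof (rpow_nonneg (1-e0) s); lra|].
    replace (1+1) with 2 by ring. replace (1-1) with 0 by ring. rewrite rpow_0.
    replace (1+e0) with (2*((1+e0)/2)) by field. replace (1-e0) with (2*((1-e0)/2)) by field.
    rewrite !rpow_mult_base by lra.
    pose proof (rpow_le_self ((1+e0)/2) s ltac:(lra) ltac:(lra)).
    pose proof (rpow_le_self ((1-e0)/2) s ltac:(lra) ltac:(lra)).
    pose proof (rpow_nonneg 2 s). nra.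
Qed.

Lemma one_fun (s R0 rho e : R) : 1 < s < R0 -> 0 < rho -> rho*rho*(R0-1) = s-1 ->
  -1 <= e <= 1 -> nrm R0 (1+rho*e) (1-rho*e) <= nrm s (1+e) (1-e).
Proof.
  intros Hs Hr Hrel He. destruct (Rle_dec 0 e).
  - apply of_pos; auto; lra.
  - pose proof (of_pos s R0 rho (-e) Hs Hr Hrel ltac:(lra)) as H.
    replace (1 + rho * - e) with (1 - rho*e) in H by ring.
    replace (1 - rho * - e) with (1 + rho*e) in H by ring.
    replace (1 + - e) with (1 - e) in H by ring.
    replace (1 - - e) with (1 + e) in H by ring.
    rewrite nrm_sym, (nrm_sym s). exact H.
Qed.

Lemma exp_convex l a b : 0 <= l <= 1 -> exp (l*a + (1-l)*b) <= l * exp a + (1-l) * exp b.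
Proof.
  intro Hl. set (m := l*a + (1-l)*b).
  assert (Ha : exp m * (1 + (a - m)) <= exp a).
  { replace (exp a) with (exp m * exp (a - m)) by (rewrite <- exp_plus; f_equal; ring).
    apply Rmult_le_compat_l; [left; apply exp_pos| apply exp_ineq1_le]. }
  assert (Hb : exp m * (1 + (b - m)) <= exp b).
  { replace (exp b) with (exp m * exp (b - m)) by (rewrite <- exp_plus; f_equal; ring).
    apply Rmult_le_compat_l; [left; apply exp_pos| apply exp_ineq1_le]. }
  assert (l * (exp m * (1 + (a - m))) + (1-l) * (exp m * (1 + (b - m))) = exp m) by (unfold m; ring).
  nra.
Qed.

Lemma young X Y P Q : 0 <= X -> 0 <= Y -> 1 < P -> 1 < Q -> /P + /Q = 1 ->
  X * Y <= rpow X P / P + rpow Y Q / Q.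
Proof.
  intros HX HY HP HQ HPQ.
  pose proof (rpow_nonneg X P). pose proof (rpow_nonneg Y Q).
  assert (0 < /P) by (apply Rinv_0_lt_compat; lra). assert (0 < /Q) by (apply Rinv_0_lt_compat; lra).
  destruct (Req_dec X 0) as [->|HX0].
  { rewrite Rmult_0_l. unfold Rdiv. nra. }
  destruct (Req_dec Y 0) as [->|HY0].
  { rewrite Rmult_0_r. unfold Rdiv. nra. }
  rewrite !rpow_exp by lra.
  rewrite <- (exp_ln X) at 1 by lra. rewrite <- (exp_ln Y) at 1 by lra. rewrite <- exp_plus.
  pose proof (exp_convex (/P) (P * ln X) (Q * ln Y) ltac:(lra)) as Hc.
  replace (/ P * (P * ln X) + (1 - / P) * (Q * ln Y)) with (ln X + ln Y) in Hc.
  - unfold Rdiv. replace (1 - /P) with (/Q) in Hc by lra. lra.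
  - replace (1 - /P) with (/Q) by lra. field. lra.
Qed.

Lemma rpow_nrm p a1 a2 : 0 < p -> rpow (nrm p a1 a2) p = (rpow a1 p + rpow a2 p)/2.
Proof.
  intro Hp. unfold nrm. rewrite rpow_rpow.
  - rewrite Rinv_l by lra. apply rpow_1. pose proof (rpow_nonneg a1 p). pose proof (rpow_nonneg a2 p). lra.
  - pose proof (rpow_nonneg a1 p). pose proof (rpow_nonneg a2 p). lra.
Qed.

Lemma nrm_zero p a1 a2 : 0 < p -> 0 <= a1 -> 0 <= a2 -> nrm p a1 a2 = 0 -> a1 = 0 /\ a2 = 0.
Proof.
  intros Hp H1 H2 H. pose proof (rpow_nrm p a1 a2 Hp) as E. rewrite H, rpow_0 in E.
  pose proof (rpow_nonneg a1 p). pose proof (rpow_nonneg a2 p).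
  split; [apply (rpow_eq0 a1 p H1)|apply (rpow_eq0 a2 p H2)]; lra.
Qed.

Lemma holder2 P Q a1 a2 c1 c2 : 1 < P -> 1 < Q -> /P + /Q = 1 ->
  0 <= a1 -> 0 <= a2 -> 0 <= c1 -> 0 <= c2 ->
  (a1*c1 + a2*c2)/2 <= nrm P a1 a2 * nrm Q c1 c2.
Proof.
  intros HP HQ HPQ H1 H2 H3 H4.
  set (A := nrm P a1 a2). set (C := nrm Q c1 c2).
  pose proof (nrm_nonneg P a1 a2) as HA0. pose proof (nrm_nonneg Q c1 c2) as HC0. fold A C in HA0, HC0.
  destruct (Req_dec A 0) as [HA|HA].
  { destruct (nrm_zero P a1 a2) as [-> ->]; auto; try lra. rewrite HA. lra. }
  destruct (Req_dec C 0) as [HC|HC].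
  { destruct (nrm_zero Q c1 c2) as [-> ->]; auto; try lra. rewrite HC. lra. }
  assert (Y : forall a c, 0 <= a -> 0 <= c -> (a/A)*(c/C) <= rpow a P * rpow (/A) P / P + rpow c Q * rpow (/C) Q / Q).
  { intros a c Ha Hc. rewrite <- !rpow_mult_base; try (left; apply Rinv_0_lt_compat; lra); auto.
    apply young; auto; unfold Rdiv; apply Rmult_le_pos; auto; left; apply Rinv_0_lt_compat; lra. }
  pose proof (Y a1 c1 H1 H3). pose proof (Y a2 c2 H2 H4).
  assert (EA : rpow (/A) P * ((rpow a1 P + rpow a2 P)/2) = 1).
  { rewrite <- (rpow_nrm P a1 a2) by lra. fold A. rewrite <- rpow_mult_base by (try (left; apply Rinv_0_lt_compat); lra).
    rewrite Rinv_l by lra. rewrite rpow_exp, ln_1, Rmult_0_r, exp_0 by lra. reflexivity. }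
  assert (EC : rpow (/C) Q * ((rpow c1 Q + rpow c2 Q)/2) = 1).
  { rewrite <- (rpow_nrm Q c1 c2) by lra. fold C. rewrite <- rpow_mult_base by (try (left; apply Rinv_0_lt_compat); lra).
    rewrite Rinv_l by lra. rewrite rpow_exp, ln_1, Rmult_0_r, exp_0 by lra. reflexivity. }
  assert (Hsum : (a1/A)*(c1/C) + (a2/A)*(c2/C) <= 2).
  { set (u := rpow (/A) P) in *. set (w := rpow (/C) Q) in *.
    assert (Hx : rpow a1 P * u / P + rpow c1 Q * w / Q + (rpow a2 P * u / P + rpow c2 Q * w / Q)
       = 2 * (/P * (u * ((rpow a1 P + rpow a2 P)/2)) + /Q * (w * ((rpow c1 Q + rpow c2 Q)/2)))) by (field; lra).
    rewrite EA, EC in Hx. lra. }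
  assert (0 < A*C) by (apply Rmult_lt_0_compat; lra).
  replace ((a1/A)*(c1/C) + (a2/A)*(c2/C)) with ((a1*c1 + a2*c2)/(A*C)) in Hsum by (field; lra).
  apply (Rmult_le_compat_r (A*C)) in Hsum; [|lra].
  replace ((a1*c1+a2*c2)/(A*C)*(A*C)) with (a1*c1+a2*c2) in Hsum by (field; lra).
  lra.
Qed.

Lemma nrm_hom p c x y : 0 < p -> 0 <= c -> 0 <= x -> 0 <= y -> nrm p (c*x) (c*y) = c * nrm p x y.
Proof.
  intros Hp Hc Hx Hy. unfold nrm. rewrite !rpow_mult_base by auto.
  replace ((rpow c p * rpow x p + rpow c p * rpow y p)/2) with (rpow c p * ((rpow x p + rpow y p)/2)) by field.
  rewrite rpow_mult_base; [|apply rpow_nonneg|pose proof (rpow_nonneg x p); pose proof (rpow_nonneg y p); lra].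
  rewrite rpow_inv_pow by lra. reflexivity.
Qed.

Lemma two_fun_1d P Q sg a1 a2 b1 b2 : 1 < P -> 1 < Q -> 0 <= sg < 1 -> (P-1)*(Q-1) = sg*sg ->
  0 <= a1 -> 0 <= a2 -> 0 <= b1 -> 0 <= b2 ->
  / 2 * ((1+sg)/2 * a1 * b1 + (1-sg)/2 * a1 * b2 + (1-sg)/2 * a2 * b1 + (1+sg)/2 * a2 * b2)
  <= nrm P a1 a2 * nrm Q b1 b2.
Proof.
  intros HP HQ Hsg Hrel H1 H2 H3 H4.
  pose proof (nrm_nonneg P a1 a2). pose proof (nrm_nonneg Q b1 b2).
  destruct (Req_dec (b1+b2) 0) as [Hb|Hb].
  { assert (b1 = 0) by lra. assert (b2 = 0) by lra. subst. nra. }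
  set (c := (b1+b2)/2). set (e := (b1-b2)/(b1+b2)).
  assert (Hc : 0 < c) by (unfold c; lra).
  assert (E1 : b1 = c*(1+e)) by (unfold c, e; field; lra).
  assert (E2 : b2 = c*(1-e)) by (unfold c, e; field; lra).
  assert (He : -1 <= e <= 1).
  { unfold e. split.
    - apply (Rmult_le_reg_r (b1+b2)); [lra|]. unfold Rdiv. rewrite Rmult_assoc, Rinv_l by lra. lra.
    - apply (Rmult_le_reg_r (b1+b2)); [lra|]. unfold Rdiv. rewrite Rmult_assoc, Rinv_l by lra. lra. }
  assert (Hsp : 0 < sg). { destruct (Req_dec sg 0) as [->|]; [|lra]. nra. }
  set (P' := P/(P-1)).
  assert (HP' : 1 < P') by (unfold P'; apply (Rmult_lt_reg_r (P-1)); [lra|]; unfold Rdiv; rewrite Rmult_assoc, Rinv_l by lra; lra).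
  assert (HPP : /P + /P' = 1) by (unfold P'; field; lra).
  assert (HQP : Q < P').
  { unfold P'. apply (Rmult_lt_reg_r (P-1)); [lra|]. unfold Rdiv. rewrite Rmult_assoc, Rinv_l by lra. nra. }
  assert (Hrel2 : sg*sg*(P'-1) = Q-1) by (unfold P'; rewrite <- Hrel; field; lra).
  pose proof (one_fun Q P' sg e (conj HQ HQP) Hsp Hrel2 He) as OF.
  assert (L : / 2 * ((1+sg)/2 * a1 * b1 + (1-sg)/2 * a1 * b2 + (1-sg)/2 * a2 * b1 + (1+sg)/2 * a2 * b2)
     = (a1 * (c*(1+sg*e)) + a2 * (c*(1-sg*e)))/2).
  { rewrite E1, E2. field. }
  rewrite L.
  assert (0 <= 1 + sg*e) by (assert (0 <= sg*(e+1)) by (apply Rmult_le_pos; lra); nra).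
  assert (0 <= 1 - sg*e) by (assert (0 <= sg*(1-e)) by (apply Rmult_le_pos; lra); nra).
  eapply Rle_trans.
  - apply (holder2 P P' a1 a2 (c*(1+sg*e)) (c*(1-sg*e))); auto; apply Rmult_le_pos; lra.
  - rewrite nrm_hom by nra. rewrite E1, E2, nrm_hom by lra.
    apply Rmult_le_compat_l; auto. apply Rmult_le_compat_l; lra.
Qed.

Lemma sumR_ext {T} (h1 h2 : T -> R) l : (forall v, h1 v = h2 v) -> sumR h1 l = sumR h2 l.
Proof. intro H. induction l; simpl; [reflexivity|]. rewrite H, IHl. reflexivity. Qed.

Lemma sumR_comb4 {T} c1 c2 c3 c4 (h1 h2 h3 h4 : T -> R) l :
  sumR (fun v => c1*h1 v + c2*h2 v + c3*h3 v + c4*h4 v) l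
  = c1*sumR h1 l + c2*sumR h2 l + c3*sumR h3 l + c4*sumR h4 l.
Proof. induction l; simpl; [ring|]. rewrite IHl. ring. Qed.

Lemma sumR_plus {T} (h1 h2 : T -> R) l : sumR (fun v => h1 v + h2 v) l = sumR h1 l + sumR h2 l.
Proof. induction l; simpl; [ring|]. rewrite IHl. ring. Qed.

Lemma sumR_nonneg {T} (h : T -> R) l : (forall v, 0 <= h v) -> 0 <= sumR h l.
Proof. intro H. induction l; simpl; [lra|]. pose proof (H a). lra. Qed.

Lemma sumR_le {T} (h1 h2 : T -> R) l : (forall v, h1 v <= h2 v) -> sumR h1 l <= sumR h2 l.
Proof. intro H. induction l; simpl; [lra|]. pose proof (H a). lra. Qed.

Lemma sumR_app {T} (h : T -> R) l1 l2 : sumR h (l1 ++ l2) = sumR h l1 + sumR h l2.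
Proof. induction l1; simpl; [ring|]. unfold sumR in *. simpl. rewrite IHl1. ring. Qed.

Lemma sumR_flat {T U} (h : T -> R) (F : U -> list T) l :
  sumR h (flat_map F l) = sumR (fun v => sumR h (F v)) l.
Proof. induction l; simpl; [reflexivity|]. rewrite sumR_app, IHl. reflexivity. Qed.

Lemma sumR_cube_S (h : list bool -> R) d :
  sumR h (cube (S d)) = sumR (fun v => h (true :: v) + h (false :: v)) (cube d).
Proof.
  simpl. rewrite sumR_flat. apply sumR_ext. intro v. simpl. ring.
Qed.

Definition Nd (p : R) (d : nat) (f : list bool -> R) :=
  rpow (sumR (fun v => rpow (f v) p) (cube d) / 2^d) (/ p).

Definition Jd (sg : R) (d : nat) (f g : list bool -> R) :=
  sumR (fun x => sumR (fun y => f x * g y * (/ 2 ^ d) * noise_kernel sg x y) (cube d)) (cube d).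

Lemma Nd_S p d f : 0 < p ->
  Nd p (S d) f = nrm p (Nd p d (fun v => f (true::v))) (Nd p d (fun v => f (false::v))).
Proof.
  intro Hp. unfold nrm, Nd. rewrite !rpow_rpow.
  2,3: apply Rmult_le_pos; [apply sumR_nonneg; intro; apply rpow_nonneg|left; apply Rinv_0_lt_compat, pow_lt; lra].
  rewrite Rinv_l by lra.
  rewrite !rpow_1.
  2,3: apply Rmult_le_pos; [apply sumR_nonneg; intro; apply rpow_nonneg|left; apply Rinv_0_lt_compat, pow_lt; lra].
  f_equal. rewrite sumR_cube_S, sumR_plus. simpl. field. apply pow_nonzero. lra.
Qed.

Lemma Jd_S sg d f g :
  Jd sg (S d) f g = / 2 * ((1+sg)/2 * Jd sg d (fun v => f (true::v)) (fun v => g (true::v))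
    + (1-sg)/2 * Jd sg d (fun v => f (true::v)) (fun v => g (false::v))
    + (1-sg)/2 * Jd sg d (fun v => f (false::v)) (fun v => g (true::v))
    + (1+sg)/2 * Jd sg d (fun v => f (false::v)) (fun v => g (false::v))).
Proof.
  unfold Jd. rewrite sumR_cube_S.
  rewrite !Rmult_plus_distr_l, <- !Rmult_assoc.
  rewrite <- sumR_comb4. apply sumR_ext. intro x.
  rewrite !sumR_cube_S. rewrite <- sumR_plus.
  rewrite <- sumR_comb4. apply sumR_ext. intro y.
  simpl. field. apply pow_nonzero. lra.
Qed.

Lemma tensor P Q sg : 1 < P -> 1 < Q -> 0 <= sg < 1 -> (P-1)*(Q-1) = sg*sg ->
  forall d f g, (forall v, 0 <= f v) -> (forall v, 0 <= g v) ->
  Jd sg d f g <= Nd P d f * Nd Q d g.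
Proof.
  intros HP HQ Hsg Hrel d. induction d as [|d IH]; intros f g Hf Hg.
  - unfold Jd, Nd. simpl.
    replace ((rpow (f []) P + 0) / 1) with (rpow (f []) P) by field.
    replace ((rpow (g []) Q + 0) / 1) with (rpow (g []) Q) by field.
    rewrite !rpow_inv_pow by (auto; lra). lra.
  - rewrite Jd_S, Nd_S, Nd_S by lra.
    eapply Rle_trans; [|apply (two_fun_1d P Q sg); auto; apply rpow_nonneg].
    apply Rmult_le_compat_l; [lra|].
    pose proof (IH (fun v => f (true::v)) (fun v => g (true::v)) (fun v => Hf _) (fun v => Hg _)).
    pose proof (IH (fun v => f (true::v)) (fun v => g (false::v)) (fun v => Hf _) (fun v => Hg _)).
    pose proof (IH (fun v => f (false::v)) (fun v => g (true::v)) (fun v => Hf _) (fun v => Hg _)).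
    pose proof (IH (fun v => f (false::v)) (fun v => g (false::v)) (fun v => Hf _) (fun v => Hg _)).
    assert (0 <= (1+sg)/2) by lra. assert (0 <= (1-sg)/2) by lra.
    rewrite !(Rmult_assoc ((1+sg)/2)), !(Rmult_assoc ((1-sg)/2)).
    repeat apply Rplus_le_compat; apply Rmult_le_compat_l; auto.
Qed.

Lemma rpow_ind b q : rpow (ind b) q = ind b.
Proof. destruct b; simpl. - rewrite rpow_exp, ln_1, Rmult_0_r, exp_0 by lra. reflexivity. - apply rpow_0. Qed.

Lemma Nd_ind p d (B : subset_V) : Nd p d (fun v => ind (B v)) = rpow (mu d B) (/ p).
Proof. unfold Nd, mu. f_equal. f_equal. apply sumR_ext. intro. apply rpow_ind. Qed.

Lemma ind_nonneg b : 0 <= ind b.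
Proof. destruct b; simpl; lra. Qed.

Theorem lemma6p2 (d : nat) (c p q gamma m : R) :
  1 < c ->
  1 <= p -> 1 <= q ->
  (p - 1) * (q - 1) = (1 - 1 / c) ^ 2 ->
  0 <= gamma <= 1 ->
  1 <= m ->
  Phi_r_ge d (1 - 1 / c) (1 / m) gamma
    (rpow gamma q * Rpower m (1 + q / p - q)).
Proof.
  intros Hc Hp Hq Hrel Hg Hm r [A [B [HA [HAm [Hcond Hr]]]]].
  set (sg := 1 - 1/c) in *.
  assert (Hsg : 0 < sg < 1).
  { unfold sg. assert (0 < 1/c < 1); [|lra]. split; [apply Rdiv_lt_0_compat; lra|].
    apply (Rmult_lt_reg_r c); [lra|]. unfold Rdiv. rewrite Rmult_assoc, Rinv_l by lra. lra. }
  assert (Hrel' : (q-1)*(p-1) = sg*sg) by (rewrite Rmult_comm, Hrel; ring).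
  assert (Hp1 : 1 < p). { destruct (Req_dec p 1) as [->|]; [|lra]. nra. }
  assert (Hq1 : 1 < q). { destruct (Req_dec q 1) as [->|]; [|lra]. nra. }
  pose proof (tensor q p sg Hq1 Hp1 ltac:(lra) Hrel' d (fun v => ind (B v)) (fun v => ind (A v))
     (fun v => ind_nonneg _) (fun v => ind_nonneg _)) as T.
  rewrite !Nd_ind in T.
  assert (Ej : Jd sg d (fun v => ind (B v)) (fun v => ind (A v)) = joint_prob d sg B A) by reflexivity.
  rewrite Ej in T.
  unfold cond_prob in Hcond.
  assert (Hjg : gamma * mu d A <= joint_prob d sg B A).
  { apply Rge_le in Hcond. apply (Rmult_le_compat_r (mu d A)) in Hcond; [|lra].
    unfold Rdiv in Hcond. rewrite Rmult_assoc, Rinv_l, Rmult_1_r in Hcond by lra. lra. }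
  assert (HB0 : 0 <= mu d B).
  { unfold mu. apply Rmult_le_pos; [apply sumR_nonneg; intro; apply ind_nonneg|].
    left; apply Rinv_0_lt_compat, pow_lt; lra. }
  subst r. apply Rle_ge.
  destruct (Req_dec gamma 0) as [->|Hg0].
  { rewrite rpow_0, Rmult_0_l. apply Rmult_le_pos; [lra|left; apply Rinv_0_lt_compat; lra]. }
  assert (Hg1 : 0 < gamma) by lra.
  assert (HB : 0 < mu d B).
  { destruct HB0 as [|HB]; auto. rewrite <- HB, rpow_0, Rmult_0_l in T.
    assert (0 < gamma * mu d A) by (apply Rmult_lt_0_compat; lra). lra. }
  rewrite rpow_exp in T by lra. rewrite rpow_exp in T by lra.
  rewrite <- exp_plus in T.
  assert (Hl : ln gamma + ln (mu d A) <= / q * ln (mu d B) + / p * ln (mu d A)).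
  { replace (ln gamma + ln (mu d A)) with (ln (gamma * mu d A)) by (apply ln_mult; lra). rewrite <- (ln_exp (/ q * ln (mu d B) + / p * ln (mu d A))).
    apply ln_le_mono; [apply Rmult_lt_0_compat; lra|lra]. }
  rewrite rpow_exp by lra. unfold Rpower. rewrite <- exp_plus.
  rewrite <- (exp_ln (mu d B / mu d A)) by (apply Rdiv_lt_0_compat; lra).
  apply exp_le_mono.
  replace (ln (mu d B / mu d A)) with (ln (mu d B) - ln (mu d A)) by (unfold Rdiv; rewrite ln_mult, ln_Rinv by (try apply Rinv_0_lt_compat; lra); ring).
  assert (Hlm : ln (mu d A) <= - ln m).
  { rewrite <- ln_Rinv by lra. apply ln_le_mono; [lra|]. unfold Rdiv in HAm. lra. }
  assert (He : q - q/p - 1 <= 0).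
  { assert (p*q - q - p <= 0) by nra.
    apply (Rmult_le_reg_r p); [lra|]. unfold Rdiv. field_simplify; [lra|lra]. }
  assert (Hq2 : ln (mu d B) >= q * ln gamma + (q - q/p) * ln (mu d A)).
  { apply (Rmult_le_compat_l q) in Hl; [|lra].
    replace (q * (/ q * ln (mu d B) + / p * ln (mu d A))) with (ln (mu d B) + q/p * ln (mu d A)) in Hl by (field; lra).
    lra. }
  assert ((q - q/p - 1) * ln (mu d A) >= (q - q/p - 1) * (- ln m)).
  { apply Rle_ge. apply Rmult_le_compat_neg_l; lra. }
  assert ((1 + q/p - q) * ln m = (q - q/p - 1) * (- ln m)) by ring.
  nra.
Qed.
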